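(* Let $q$ be a prime power and $n \ge 2$ an integer. For any $\epsilon_1, \epsilon_2 > 0$ there are numbers $\epsilon_3 = \epsilon_3(\epsilon_1, q) > 0$ and $C = C(\epsilon_1,\epsilon_2,\epsilon_3,n,q)$ such that, if an $n$-tuple $(T_1,\ldots,T_n)$ of positive integers satisfies $T_1\cdots T_n > C$ and a non-negative integer $k$ satisfies $k < \epsilon_3 T_1\cdots T_n$, then choosing a periodic sequence $s:\mathbb{N}_0^n \to \mathbb{F}_q$ of period $(T_1,\ldots,T_n)$ with each such sequence having equal probability $1/q^{T_1\cdots T_n}$, we have $$\mathcal{P}\left( L_k(s) > \sqrt{(1-\epsilon_1) T_1\cdots T_n/(n-1)} \right) > 1 - \epsilon_2.$$
   Context: An $n$-dimensional sequence over $\mathbb{F}_q$ is a map $s:\mathbb{N}_0^n \to \mathbb{F}_q$. A polynomial $P(\mathbf{X}) = \sum_{\mathbf{j}} a_{\mathbf{j}} X_1^{j_1}\cdots X_n^{j_n} \in \mathbb{F}_q[X_1,\ldots,X_n]$ acts on $s$ by $(Ps)(\mathbf{m}) = \sum_{\mathbf{j}} a_{\mathbf{j}} s(\mathbf{m}+\mathbf{j})$. Let $I(s) = \{P : Ps = 0\}$, an ideal. The linear complexity $L(s)$ is the dimension of $\mathbb{F}_q[X_1,\ldots,X_n]/I(s)$ over $\mathbb{F}_q$. The sequence $s$ is periodic with period $(T_1,\ldots,T_n)$ if $X_i^{T_i}-1 \in I(s)$ for all $i$, i.e. $s(\mathbf{m}+T_i\mathbf{e}_i)=s(\mathbf{m})$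 for all $\mathbf{m}$ and $i$; such a sequence is determined by its values on $\{(m_1,\ldots,m_n): 0 \le m_i \le T_i-1\}$. For such $s$ and an integer $0\le k \le T_1\cdots T_n$, the $k$-error linear complexity $L_k(s)$ is the minimum of $L(\sigma)$ over all $(T_1,\ldots,T_n)$-periodic sequences $\sigma$ differing from $s$ in at most $k$ positions $(m_1,\ldots,m_n)$ with $0\le m_i\le T_i-1$. *)

(* Defs.v *)
From HB Require Import structures.
From mathcomp Require Import all_boot all_order all_algebra all_field.
From mathcomp Require Import mpoly.
From Stdlib Require Import ClassicalEpsilon.

Set Implicit Arguments.
Unset Strict Implicit.
Unset Printing Implicit Defensive.

Import Order.TTheory GRing.Theory.
Local Open Scope ring_scope.

Definition pbool (P : Prop) : bool :=
  if excluded_middle_informative P then true else false.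

Section LinComp.
Variables (F : finFieldType) (n : nat).

Definition nseqF := 'X_{1..n} -> F.

Definition poly_act (P : {mpoly F[n]}) (s : nseqF) : nseqF :=
  fun m => \sum_(j <- msupp P) P@_j * s (m + j)%MM.

Definition in_ann (s : nseqF) (P : {mpoly F[n]}) : Prop :=
  forall m, poly_act P s m = 0.

(* The images of ps in F[X]/I(s) are linearly independent over F. *)
Definition indep_mod (s : nseqF) (ps : seq {mpoly F[n]}) : Prop :=
  forall c : seq F, size c = size ps ->
    in_ann s (\sum_(i < size ps) c`_i *: ps`_i) -> forall i, c`_i = 0.

Definition quot_dim (s : nseqF) (d : nat) : Prop :=
  (exists ps, size ps = d /\ indep_mod s ps) /\
  (forall ps, indep_mod s ps -> (size ps <= d)%N).

(* Linear complexity L(s) = dim_F F[X]/I(s) (finite for periodic s;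
   set to 0 in the irrelevant infinite-dimensional case). *)
Definition lin_comp (s : nseqF) : nat :=
  match excluded_middle_informative (exists d, quot_dim s d) with
  | left H => proj1_sig (constructive_indefinite_description _ H)
  | right _ => 0%N
  end.

Variable T : 'I_n -> nat.

(* Box {(m_1..m_n) : 0 <= m_i <= T_i - 1}; for T_i > 0, (T_i).-1.+1 = T_i. *)
Definition box := {dffun forall i : 'I_n, 'I_(T i).-1.+1}.

Definition box_pt (b : box) : 'X_{1..n} := [multinom (b i : nat) | i < n].

Definition box_proj (m : 'X_{1..n}) : box :=
  [ffun i => inord (m i %% T i)].

Definition perext (f : {ffun box -> F}) : nseqF := fun m => f (box_proj m).

(* k-error linear complexity of a (T_1..T_n)-periodic sequence s:
   min of L(sigma) over periodic sigma differing from s in <= k box points.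
   (s itself is such a sigma, so the initial value lin_comp s is harmless.) *)
Definition kerr_lin_comp (k : nat) (s : nseqF) : nat :=
  \big[minn/lin_comp s]_(g : {ffun box -> F} |
       (#|[set b : box | s (box_pt b) != g b]| <= k)%N)
     lin_comp (perext g).

Definition per_prob (R : numFieldType) (E : nseqF -> Prop) : R :=
  (#|[set f : {ffun box -> F} | pbool (E (perext f))]|%:R)
  / ((#|F| ^ (\prod_(i < n) T i))%N%:R).

End LinComp.

(* Main.v *)
Require Import Defs.
From HB Require Import structures.
From mathcomp Require Import all_boot all_order all_algebra all_field.
From mathcomp Require Import reals.
From mathcomp Require Import ssrcomplements mpoly.
From Stdlib Require Import ClassicalEpsilon.
From mathcomp Require Import ring zify.
Set Warnings "-notation-overridden,-ambiguous-paths,-notation-incompatible-prefix".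
Import Order.TTheory GRing.Theory Num.Theory.
Local Open Scope ring_scope.
Set Implicit Arguments.
Unset Strict Implicit.
Unset Printing Implicit Defensive.

Section Act.
Variables (F : finFieldType) (n : nat).
Implicit Types (s : 'X_{1..n} -> F) (P Q : {mpoly F[n]}).

Lemma poly_act_fin P s m i : (msize P <= i)%N ->
  poly_act P s m = \sum_(j : 'X_{1..n < i}) P@_j * s (m + val j)%MM.
Proof.
move=> le_pi; set I : subFinType _ := 'X_{1..n < i}.
rewrite /poly_act (big_mksub I) ?msupp_uniq //=; first last.
  by move=> x /msize_mdeg_lt /leq_trans; apply.
rewrite big_rmcond //= => j /memN_msupp_eq0 ->.
by rewrite mul0r.
Qed.

Lemma poly_actD P Q s m : poly_act (P + Q) s m = poly_act P s m + poly_act Q s m.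
Proof.
pose i := maxn (msize (P + Q)) (maxn (msize P) (msize Q)).
have h1 : (msize (P + Q) <= i)%N by rewrite leq_maxl.
have h2 : (msize P <= i)%N by rewrite (leq_trans _ (leq_maxr _ _)) ?leq_maxl.
have h3 : (msize Q <= i)%N by rewrite (leq_trans _ (leq_maxr _ _)) ?leq_maxr.
rewrite (poly_act_fin _ _ h1) (poly_act_fin _ _ h2) (poly_act_fin _ _ h3).
by rewrite -big_split /=; apply: eq_bigr => j _; rewrite mcoeffD mulrDl.
Qed.

Lemma poly_actZ c P s m : poly_act (c *: P) s m = c * poly_act P s m.
Proof.
pose i := maxn (msize (c *: P)) (msize P).
rewrite !(@poly_act_fin _ _ _ i) ?leq_maxl ?leq_maxr // mulr_sumr.
by apply: eq_bigr => j _; rewrite mcoeffZ mulrA.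
Qed.

Lemma poly_act0 s m : poly_act 0 s m = 0.
Proof. by rewrite /poly_act msupp0 big_nil. Qed.

Lemma poly_act_sum (k : nat) (c : 'I_k -> F) (Ps : 'I_k -> {mpoly F[n]}) s m :
  poly_act (\sum_(i < k) c i *: Ps i) s m = \sum_(i < k) c i * poly_act (Ps i) s m.
Proof.
elim/big_rec2: _ => [|i y p _ <-]; first exact: poly_act0.
by rewrite poly_actD poly_actZ.
Qed.

Lemma poly_actX j s m : poly_act 'X_[j] s m = s (m + j)%MM.
Proof. by rewrite /poly_act msuppX big_seq1 mcoeffX eqxx mul1r. Qed.

End Act.

Lemma pboolP (P : Prop) : pbool P = true <-> P.
Proof. by rewrite /pbool; case: excluded_middle_informative. Qed.

Section Struct.
Variables (F : finFieldType) (n : nat) (s : 'X_{1..n} -> F) (L : nat).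
Hypothesis Hind : forall ps, indep_mod s ps -> (size ps <= L)%N.

Definition spannedBy (P : 'X_{1..n} -> Prop) (x : 'X_{1..n}) : Prop :=
  exists S : seq 'X_{1..n}, (forall j, j \in S -> P j) /\
  exists c : 'X_{1..n} -> F, forall m, s (m + x)%MM = \sum_(j <- S) c j * s (m + j)%MM.

Definition inB (j : 'X_{1..n}) : Prop := ~ spannedBy (fun j' => (j' < j)%O) j.

Lemma seq_max (l : seq 'X_{1..n}) (P : pred 'X_{1..n}) : has P l ->
  exists x, [/\ x \in l, P x & forall y, y \in l -> P y -> (y <= x)%O].
Proof.
elim: l => [|a l IH] //= hh.
case: (boolP (has P l)) => hl.
  have [x [xl Px hx]] := IH hl.
  case Pa: (P a); last first.
    exists x; split => //; first by rewrite inE xl orbT.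
    by move=> y; rewrite inE => /orP [/eqP -> | yl Py]; [rewrite Pa | exact: hx].
  case: (leP a x) => ax.
    exists x; split => //; first by rewrite inE xl orbT.
    by move=> y; rewrite inE => /orP [/eqP -> | yl Py] //; exact: hx.
  exists a; split => //; first by rewrite inE eqxx.
  move=> y; rewrite inE => /orP [/eqP -> _|yl Py] //.
  exact: le_trans (hx y yl Py) (ltW ax).
have Pa : P a by case/orP: hh => // hl'; rewrite hl' in hl.
exists a; split => //; first by rewrite inE eqxx.
move=> y; rewrite inE => /orP [/eqP -> _|yl Py] //.
by move/hasPn: hl => /(_ y yl); rewrite Py.
Qed.

Lemma tri (J : seq 'X_{1..n}) (cf : 'X_{1..n} -> F) : uniq J ->
  (forall j, j \in J -> inB j) ->
  (forall m, \sum_(j <- J) cf j * s (m + j)%MM = 0) ->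
  forall j, j \in J -> cf j = 0.
Proof.
move=> uJ hB hsum.
case: (boolP (has (fun j => cf j != 0) J)) => hh; last first.
  by move=> j jJ; move/hasPn: hh => /(_ j jJ); rewrite negbK => /eqP.
have [j0 [j0J cj0 hmax]] := seq_max hh.
exfalso; apply: (hB j0 j0J).
exists [seq j <- J | (j < j0)%O]; split.
  by move=> j; rewrite mem_filter => /andP [].
exists (fun j => - cf j / cf j0) => m.
have E2 : \sum_(i <- J | ~~ (i < j0)%O) cf i * s (m + i)%MM = cf j0 * s (m + j0)%MM.
  rewrite -big_filter (bigD1_seq j0); last by rewrite filter_uniq.
    rewrite big_seq_cond big1 ?Monoid.mulm1 //.
    move=> j /andP [jJ' hj2]; move: jJ'; rewrite mem_filter => /andP [hj1 jJ].
    case: (eqVneq (cf j) 0) => [->|cj]; first by rewrite mul0r.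
    have := hmax j jJ cj; rewrite le_eqVlt (negbTE hj2) orFb => hlt.
    by rewrite hlt in hj1.
  by rewrite mem_filter ltxx j0J.
have H : \sum_(i <- J | (i < j0)%O) cf i * s (m + i)%MM + cf j0 * s (m + j0)%MM = 0.
  rewrite -E2; move: (hsum m); rewrite (bigID (fun j => (j < j0)%O)) => H0; exact: H0.
rewrite big_filter.
have -> : \sum_(i <- J | (i < j0)%O) - cf i / cf j0 * s (m + i)%MM
   = (- (cf j0)^-1) * \sum_(i <- J | (i < j0)%O) cf i * s (m + i)%MM.
  by rewrite mulr_sumr; apply: eq_bigr => i _; ring.
move/eqP: H; rewrite addr_eq0 => /eqP ->.
by rewrite mulNr mulrN opprK mulrA mulVf ?mul1r.
Qed.

Lemma indep_inB (J : seq 'X_{1..n}) : uniq J -> (forall j, j \in J -> inB j) ->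
  (size J <= L)%N.
Proof.
move=> uJ hB; have := Hind (ps := [seq 'X_[j] | j <- J]); rewrite size_map; apply.
move=> c hc hann.
have hs : forall m, \sum_(j <- J) c`_(index j J) * s (m + j)%MM = 0.
  move=> m; apply: (etrans _ (hann m)); rewrite poly_act_sum.
  rewrite (big_nth 0%MM) -(big_mkord xpredT (fun i => c`_i * poly_act ([seq 'X_[j] | j <- J]`_i) s m)) size_map.
  apply: eq_big_nat => i /andP [_ hi].
  by rewrite index_uniq // (nth_map 0%MM) ?poly_actX.
have h0 := tri (cf := fun j => c`_(index j J)) uJ hB hs.
move=> i; case: (ltnP i (size J)) => hi.
  by have := h0 (nth 0%MM J i) (mem_nth _ hi); rewrite index_uniq.
by rewrite nth_default // hc size_map.
Qed.

Lemma inB_pred j i : inB j -> (0 < j i)%N -> inB (j - U_(i))%MM.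
Proof.
move=> hj hi [S [hS [c hc]]]; apply: hj.
have le : (U_(i) <= j)%MM.
  by apply/mnm_lepP => k; rewrite mnm1E; case: eqP => // <-.
have ej : (j - U_(i) + U_(i))%MM = j by rewrite submK.
exists [seq (x + U_(i))%MM | x <- S]; split.
  move=> y /mapP [x xS ->]; rewrite -ej ltmc_add2l; exact: hS.
exists (fun y => c (y - U_(i))%MM) => m; rewrite big_map.
have -> : (m + j = (m + U_(i)) + (j - U_(i)))%MM.
  by rewrite -{1}ej [(_ + U_(i))%MM]addmC addmA.
rewrite hc; apply: eq_bigr => x _; rewrite addmK; congr (_ * s _).
by rewrite [(x + _)%MM]addmC addmA.
Qed.

Lemma mdeg_pos_coord (j : 'X_{1..n}) : (0 < mdeg j)%N -> exists i, (0 < j i)%N.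
Proof.
move=> h; apply/existsP/negbNE/negP => /existsPn hn.
have : j = 0%MM by apply/mnmP => i; rewrite mnm0E; move: (hn i); rewrite lt0n negbK => /eqP.
by move=> ej; rewrite ej mdeg0 in h.
Qed.

Lemma mdeg_pred (j : 'X_{1..n}) i : (0 < j i)%N -> mdeg (j - U_(i))%MM = (mdeg j).-1.
Proof.
move=> hi.
have le : (U_(i) <= j)%MM.
  by apply/mnm_lepP => k; rewrite mnm1E; case: eqP => // <-.
have := congr1 mdeg (submK le); rewrite mdegD mdeg1 => <-.
by rewrite addn1.
Qed.

Lemma inB_down k : forall j, inB j -> mdeg j = k ->
  forall d, (d <= k)%N -> exists x, inB x /\ mdeg x = d.
Proof.
elim: k => [|k IH] j hj hk d hd.
  by exists j; move: hd; rewrite leqn0 => /eqP ->.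
case: (ltnP d k.+1) => hd'; last first.
  by exists j; split => //; rewrite hk; apply/eqP; rewrite eqn_leq hd hd'.
have [i hi] : exists i, (0 < j i)%N by apply: mdeg_pos_coord; rewrite hk.
apply: (IH (j - U_(i))%MM) => //; first exact: inB_pred.
by rewrite mdeg_pred // hk.
Qed.

Lemma inB_mdeg j : inB j -> (mdeg j < L)%N.
Proof.
move=> hj.
have : forall k, (k <= mdeg j)%N -> exists l : seq 'X_{1..n},
    [/\ uniq l, (forall x, x \in l -> inB x), size l = k.+1 &
        (forall x, x \in l -> (mdeg x <= k)%N)].
  elim=> [|k IH] hk.
    have [x [hx dx]] := inB_down hj erefl (leq0n _).
    by exists [:: x]; split => // y; rewrite inE => /eqP ->; rewrite ?dx.
  have [l [ul hl sl dl]] := IH (ltnW hk).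
  have [x [hx dx]] := inB_down hj erefl hk.
  exists (x :: l); split => /=; last 2 first.
  - by rewrite sl.
  - by move=> y; rewrite inE => /orP [/eqP ->|/dl h]; rewrite ?dx // ltnW.
  - rewrite ul andbT; apply/negP => /dl; by rewrite dx ltnn.
  - by move=> y; rewrite inE => /orP [/eqP ->|/hl].
move=> /(_ (mdeg j) (leqnn _)) [l [ul hl sl _]].
by have := indep_inB ul hl; rewrite sl.
Qed.

Definition Bs : {set 'X_{1..n < L.+2}} := [set x | pbool (inB (val x))].
Definition Bl : seq 'X_{1..n} := [seq val x | x <- enum Bs].

Lemma Bl_uniq : uniq Bl.
Proof. by rewrite (map_inj_uniq val_inj) enum_uniq. Qed.

Lemma mem_Bl j : (j \in Bl) <-> inB j.
Proof.
split.
  by case/mapP => x; rewrite mem_enum inE => /pboolP h ->.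
move=> hj; have hd : (mdeg j < L.+2)%N by apply: ltnW; apply: ltnW; apply: inB_mdeg.
apply/mapP; exists (BMultinom hd) => //.
by rewrite mem_enum inE; apply/pboolP.
Qed.

Lemma size_Bl : (size Bl <= L)%N.
Proof. by apply: indep_inB; [exact: Bl_uniq| move=> j /mem_Bl]. Qed.

Lemma comb (S : seq 'X_{1..n}) (c0 : 'X_{1..n} -> F) :
  (forall x, x \in S -> exists c : 'X_{1..n} -> F,
      forall m, s (m + x)%MM = \sum_(b <- Bl) c b * s (m + b)%MM) ->
  exists c : 'X_{1..n} -> F, forall m,
    \sum_(x <- S) c0 x * s (m + x)%MM = \sum_(b <- Bl) c b * s (m + b)%MM.
Proof.
elim: S => [|x S IH] h.
  by exists (fun _ => 0) => m; rewrite big_nil big1 // => b _; rewrite mul0r.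
have [cx hx] := h x (mem_head _ _).
have [cS hS] : exists c : 'X_{1..n} -> F, forall m,
    \sum_(x <- S) c0 x * s (m + x)%MM = \sum_(b <- Bl) c b * s (m + b)%MM.
  by apply: IH => y yS; apply: h; rewrite inE yS orbT.
exists (fun b => c0 x * cx b + cS b) => m.
rewrite big_cons hx hS mulr_sumr -big_split /=; apply: eq_bigr => b _.
by rewrite mulrDl mulrA.
Qed.

Lemma span_all j : exists c : 'X_{1..n} -> F,
  forall m, s (m + j)%MM = \sum_(b <- Bl) c b * s (m + b)%MM.
Proof.
elim/(well_founded_ind (@ltom_wf n)): j => j IH.
case: (classic (inB j)) => hj.
  exists (fun b => (b == j)%:R) => m.
  rewrite (bigD1_seq j) ?Bl_uniq //; last exact/mem_Bl.
  rewrite eqxx mul1r big1 ?Monoid.mulm1 // => b /negbTE ->; by rewrite mul0r.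
have [S [hS [c hc]]] : spannedBy (fun j' => (j' < j)%O) j by apply: NNPP.
have [c' hc'] := comb c (fun x xS => IH x (hS x xS)).
by exists c' => m; rewrite hc hc'.
Qed.

End Struct.

Definition Kc (n L : nat) := ((n.-1) * L.+1 + n.+1).+1.

Notation code_t F n L :=
  ({ffun 'I_L.+1 -> {ffun 'I_n -> 'I_L.+1}} * {ffun 'I_L.+1 * 'I_n -> 'I_(Kc n L)}
   * {ffun 'I_(Kc n L) -> {ffun 'I_L.+1 -> F}} * {ffun 'I_L.+1 -> F})%type.

Section Code.
Variables (F : finFieldType) (n L : nat).
Implicit Types (c : code_t F n L) (s : 'X_{1..n} -> F).

Definition posm c (t : 'I_L.+1) : 'X_{1..n} := [multinom (c.1.1.1 t i : nat) | i < n].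

Definition coefc c (t : 'I_L.+1) (i : 'I_n) : 'I_L.+1 -> F :=
  match [pick t' | posm c t' == (posm c t + U_(i))%MM] with
  | Some t0 => fun t' => (t' == t0)%:R
  | None => c.1.2 (c.1.1.2 (t, i))
  end.

Definition Rep c s : Prop :=
  [/\ exists t, posm c t = 0%MM,
      forall t i m, s (m + (posm c t + U_(i)))%MM
         = \sum_t' coefc c t i t' * s (m + posm c t')%MM
    & forall t, c.2 t = s (posm c t)].

Lemma sum_delta (t0 : 'I_L.+1) (f : 'I_L.+1 -> F) :
  \sum_t (t == t0)%:R * f t = f t0.
Proof.
rewrite (bigD1 t0) //= eqxx mul1r big1 ?Monoid.mulm1 ?addr0 // => t /negbTE ->; by rewrite mul0r.
Qed.

Lemma Rep_step c s (j : 'X_{1..n}) (i : 'I_n) (d' : 'I_L.+1 -> F) : Rep c s -> (0 < j i)%N ->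
  (forall m, s (m + (j - U_(i)))%MM = \sum_t d' t * s (m + posm c t)%MM) ->
  forall m, s (m + j)%MM
    = \sum_t' (\sum_t d' t * coefc c t i t') * s (m + posm c t')%MM.
Proof.
move=> [_ hR _] hi hd m.
have le : (U_(i) <= j)%MM.
  by apply/mnm_lepP => k; rewrite mnm1E; case: eqP => // <-.
have ej : (j - U_(i) + U_(i))%MM = j by rewrite submK.
have -> : (m + j = (m + U_(i)) + (j - U_(i)))%MM.
  by rewrite -{1}ej [(_ + U_(i))%MM]addmC addmA.
rewrite hd.
have -> : \sum_t d' t * s (m + U_(i) + posm c t)%MM
   = \sum_t d' t * \sum_t' coefc c t i t' * s (m + posm c t')%MM.
  apply: eq_bigr => t _; rewrite -hR; congr (_ * s _).
  by rewrite [(posm c t + _)%MM]addmC addmA.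
rewrite (eq_bigr (fun t => \sum_t' d' t * (coefc c t i t' * s (m + posm c t')%MM))); last first.
  by move=> t _; rewrite mulr_sumr.
rewrite exchange_big /=; apply: eq_bigr => t' _.
by rewrite mulr_suml; apply: eq_bigr => t _; rewrite mulrA.
Qed.

Lemma Rep_uniq c s1 s2 : Rep c s1 -> Rep c s2 -> forall j, s1 j = s2 j.
Proof.
move=> R1 R2.
have key : forall k j, mdeg j = k -> exists d : 'I_L.+1 -> F, forall m,
    s1 (m + j)%MM = \sum_t d t * s1 (m + posm c t)%MM /\
    s2 (m + j)%MM = \sum_t d t * s2 (m + posm c t)%MM.
  elim=> [|k IH] j hk.
    have -> : j = 0%MM by apply/eqP; rewrite -mdeg_eq0 hk.
    case: R1 => [[t0 ht0] _ _].
    exists (fun t => (t == t0)%:R) => m; rewrite !sum_delta ht0 !addm0; split => //.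
  have [i hi] : exists i, (0 < j i)%N by apply: mdeg_pos_coord; rewrite hk.
  have [d' hd'] := IH (j - U_(i))%MM (etrans (mdeg_pred hi) (congr1 predn hk)).
  exists (fun t' => \sum_t d' t * coefc c t i t') => m; split.
    by apply: (Rep_step R1 hi) => m'; case: (hd' m').
  by apply: (Rep_step R2 hi) => m'; case: (hd' m').
move=> j; have [d hd] := key _ j erefl.
rewrite -(add0m j); case: (hd 0%MM) => -> ->.
case: R1 => [_ _ h1]; case: R2 => [_ _ h2].
by apply: eq_bigr => t _; rewrite !add0m -h1 -h2.
Qed.

End Code.

Lemma coord_le_mdeg n (m : 'X_{1..n}) i : (m i <= mdeg m)%N.
Proof. by rewrite mdegE (bigD1 i) //= leq_addr. Qed.

Lemma arithK n r L : (r <= L)%N -> ((r.+1 * n - r.-1) <= (n.-1) * L.+1 + n.+1)%N.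
Proof. by case: n => [|n']; case: r => [|r] /=; nia. Qed.

Section Exist.
Variables (F : finFieldType) (n : nat) (s : 'X_{1..n} -> F) (L : nat).
Hypothesis Hind : forall ps, indep_mod s ps -> (size ps <= L)%N.

Local Notation Bl := (Bl s L).
Local Notation Bs := (Bs s L).
Local Notation XT := 'X_{1..n < L.+2}.

Definition posx (t : nat) : 'X_{1..n} := nth 0%MM Bl t.

Lemma posx_mdeg t : (mdeg (posx t) <= L)%N.
Proof.
rewrite /posx; case: (ltnP t (size Bl)) => ht.
  by apply: ltnW; apply: (inB_mdeg Hind); apply/(mem_Bl Hind); apply: mem_nth.
by rewrite nth_default // mdeg0.
Qed.

Definition addU (t : nat) (i : 'I_n) : XT := insubd bm0 (posx t + U_(i))%MM.

Lemma addUE t i : val (addU t i) = (posx t + U_(i))%MM.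
Proof.
by rewrite insubdK // -topredE /= mdegD mdeg1 addn1 ltnS ltnS posx_mdeg.
Qed.

Definition Img : {set XT} := [set addU p.1 p.2 | p : 'I_(size Bl).+1 * 'I_n].
Definition Ds : {set XT} := Img :\: Bs.

Lemma card_Bs : #|Bs| = size Bl.
Proof. by rewrite /Bl size_map cardE. Qed.

Lemma card_Ds : (#|Ds| <= (size Bl).+1 * n - (size Bl).-1)%N.
Proof.
have h1 : (#|Img| <= (size Bl).+1 * n)%N.
  by apply: leq_trans (leq_imset_card _ _) _; rewrite ?cardsT ?card_prod ?card_ord.
have h2 : Bs :\ bm0 \subset Img :&: Bs.
  apply/subsetP => x; rewrite !inE => /andP [xn0 xB]; rewrite xB andbT.
  have hx : inB s (val x) by move/pboolP: xB.
  have [i hi] : exists i, (0 < val x i)%N.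
    apply: mdeg_pos_coord; rewrite lt0n mdeg_eq0; apply: contra xn0 => /eqP h.
    by apply/eqP/val_inj; rewrite h.
  have hB : (val x - U_(i))%MM \in Bl by apply/(mem_Bl Hind); exact: inB_pred.
  have ht : (index (val x - U_(i))%MM Bl < (size Bl).+1)%N.
    by rewrite ltnS ltnW // index_mem.
  apply/imsetP; exists (Ordinal ht, i) => //=.
  apply: val_inj; rewrite addUE /posx nth_index // submK //.
  by apply/mnm_lepP => k; rewrite mnm1E; case: eqP => // <-.
have h3 : ((size Bl).-1 <= #|Img :&: Bs|)%N.
  apply: leq_trans (subset_leq_card h2).
  rewrite -card_Bs; case: (boolP (bm0 \in Bs)) => hb.
    by rewrite (cardsD1 bm0) hb.
  by rewrite (setDidPl _) ?leq_pred // disjoint_sym disjoints1.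
rewrite /Ds cardsD.
by apply: leq_sub h1 h3.
Qed.

Lemma card_Ds_K : (#|Ds| < Kc n L)%N.
Proof.
have := card_Ds; have := size_Bl Hind; rewrite /Kc => h1 h2.
rewrite ltnS; apply: leq_trans h2 _; exact: arithK.
Qed.

Definition spanc (j : 'X_{1..n}) : 'X_{1..n} -> F :=
  proj1_sig (constructive_indefinite_description _ (span_all Hind j)).

Lemma spancP j m : s (m + j)%MM = \sum_(b <- Bl) spanc j b * s (m + b)%MM.
Proof. exact: (proj2_sig (constructive_indefinite_description _ (span_all Hind j))). Qed.

Definition the_code : code_t F n L :=
 ([ffun t : 'I_L.+1 => [ffun i : 'I_n => inord (posx t i)]],
  [ffun p : 'I_L.+1 * 'I_n => inord (index (addU p.1 p.2) (enum Ds))],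
  [ffun k : 'I_(Kc n L) => [ffun t' : 'I_L.+1 =>
      if (t' < size Bl)%N then spanc (val (nth bm0 (enum Ds) k)) (posx t') else 0]],
  [ffun t : 'I_L.+1 => s (posx t)]).

Lemma posm_code t : posm the_code t = posx t.
Proof.
apply/mnmP => i; rewrite mnmE /= !ffunE inordK //.
by rewrite ltnS (leq_trans (coord_le_mdeg _ _)) ?posx_mdeg.
Qed.

Lemma sumBl (f : 'X_{1..n} -> F) m :
  \sum_(t' < L.+1) (if (t' < size Bl)%N then f (posx t') else 0) * s (m + posx t')%MM
  = \sum_(b <- Bl) f b * s (m + b)%MM.
Proof.
rewrite [RHS](big_nth 0%MM) [RHS]big_mkord [RHS](big_ord_widen L.+1 (fun i => f (nth 0%MM Bl i) * s (m + nth 0%MM Bl i)%MM)); last by rewrite ltnW // ltnS size_Bl.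
rewrite [RHS]big_mkcond /=; apply: eq_bigr => t' _.
by case: ifP => _; rewrite ?mul0r.
Qed.

Lemma Rep_code : Rep the_code s.
Proof.
have sB := size_Bl Hind.
split.
- by exists ord_max; rewrite posm_code /posx nth_default.
- move=> t i m; rewrite /coefc; case: pickP => [t0 /eqP ht0 | hn].
    by rewrite sum_delta ht0.
  have hD : addU t i \in Ds.
    rewrite inE; apply/andP; split.
      apply/negP => hB.
      have hx : val (addU t i) \in Bl by apply/mapP; exists (addU t i); rewrite ?mem_enum.
      rewrite addUE in hx.
      have hi : (index (posx t + U_(i))%MM Bl < L.+1)%N.
        by rewrite ltnS ltnW // (leq_trans _ sB) // index_mem.
      have := hn (Ordinal hi); rewrite !posm_code /posx /= nth_index //.
      by rewrite eqxx.
    have hm : (minn t (size Bl) < (size Bl).+1)%N by rewrite ltnS geq_minr.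
    apply/imsetP; exists (Ordinal hm, i) => //=.
    apply: val_inj; rewrite !addUE; congr (_ + _)%MM.
    rewrite /minn; case: ltnP => // ht.
    by rewrite /posx !nth_default.
  have hk : (index (addU t i) (enum Ds) < Kc n L)%N.
    apply: (@leq_trans #|Ds|); last by apply: ltnW; apply: card_Ds_K.
    by rewrite cardE index_mem mem_enum.
  rewrite /the_code /= !ffunE /= inordK // nth_index ?mem_enum //.
  rewrite addUE posm_code spancP -(sumBl _ m).
  by apply: eq_bigr => t' _; rewrite ffunE posm_code.
- by move=> t; rewrite posm_code ffunE.
Qed.

End Exist.

Section Per.
Variables (F : finFieldType) (n : nat) (T : 'I_n -> nat).
Hypothesis HT : forall i, (0 < T i)%N.

Lemma box_coord_lt (b : box T) i : (b i < T i)%N.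
Proof. by have := ltn_ord (b i); rewrite [X in (_ < X)%N -> _]prednK. Qed.

Lemma box_pt_coord (b : box T) i : box_pt b i = b i.
Proof. by rewrite /box_pt mnmE. Qed.

Lemma box_proj_pt (b : box T) : box_proj T (box_pt b) = b.
Proof.
apply/ffunP => i; rewrite ffunE box_pt_coord modn_small ?box_coord_lt //.
exact: inord_val.
Qed.

Lemma perext_pt (g : {ffun box T -> F}) b : perext g (box_pt b) = g b.
Proof. by rewrite /perext box_proj_pt. Qed.

Lemma box_proj_per m j :
  box_proj T (m + j)%MM = box_proj T (box_pt (box_proj T m) + j)%MM.
Proof.
apply/ffunP => i; rewrite !ffunE; congr inord.
rewrite !mnmDE box_pt_coord ffunE inordK ?modnDml //.
by rewrite prednK ?ltn_pmod.
Qed.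

Lemma poly_act_per P (g : {ffun box T -> F}) m :
  poly_act P (perext g) m = poly_act P (perext g) (box_pt (box_proj T m)).
Proof.
by apply: eq_bigr => j _; rewrite /perext box_proj_per.
Qed.

Lemma indep_bound (g : {ffun box T -> F}) ps :
  indep_mod (perext g) ps -> (size ps <= #|box T|)%N.
Proof.
move=> hind; rewrite leqNgt; apply/negP => hlt.
pose A : 'M[F]_(size ps, #|box T|) :=
  \matrix_(i, b) poly_act ps`_i (perext g) (box_pt (enum_val b)).
have hk : kermx A != 0.
  rewrite -mxrank_eq0 mxrank_ker subn_eq0 -ltnNge.
  by apply: leq_trans hlt; rewrite ltnS rank_leq_col.
have [i0 hi0] : exists i0, row i0 (kermx A) != 0.
  apply/existsP; apply: contraR hk => /existsPn hn.
  apply/eqP/row_matrixP => i; rewrite row0; exact/eqP/negbNE/hn.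
set c := row i0 (kermx A).
have hcA : c *m A = 0 by rewrite /c -row_mul mulmx_ker row0.
pose cs := mkseq (fun i => c 0 (insubd i0 i)) (size ps).
have hcs : size cs = size ps by rewrite size_mkseq.
have := hind cs hcs.
have hann : in_ann (perext g) (\sum_(i < size ps) cs`_i *: ps`_i).
  move=> m; rewrite poly_act_sum.
  move/matrixP: hcA => /(_ 0 (enum_rank (box_proj T m))).
  rewrite !mxE => H; apply: (etrans _ H); apply: eq_bigr => i _.
  rewrite nth_mkseq // valKd; congr (_ * _).
  by rewrite /A mxE enum_rankK -poly_act_per.
move=> /(_ hann) hz; move: hi0; rewrite -/c; apply/negP; rewrite negbK.
apply/eqP/rowP => j; rewrite [RHS]mxE.
by have := hz j; rewrite nth_mkseq // valKd.
Qed.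

Lemma quot_dim_ex (g : {ffun box T -> F}) : exists d, quot_dim (perext g) d.
Proof.
pose P k := pbool (exists ps, size ps = k /\ indep_mod (perext g) ps).
have P0 : exists k, P k.
  exists 0%N; apply/pboolP; exists [::]; split => // c.
  by move/size0nil => -> _ i; rewrite nth_nil.
have Pb : forall k, P k -> (k <= #|box T|)%N.
  by move=> k /pboolP [ps [<- hps]]; exact: (indep_bound hps).
case: (ex_maxnP P0 Pb) => d /pboolP [ps [hs hps]] hmax.
exists d; split; first by exists ps.
by move=> ps' hps'; apply: hmax; apply/pboolP; exists ps'.
Qed.

Lemma lin_comp_spec (s : 'X_{1..n} -> F) : (exists d, quot_dim s d) -> quot_dim s (lin_comp s).
Proof.
rewrite /lin_comp; case: excluded_middle_informative => // H _.
exact: (proj2_sig (constructive_indefinite_description _ H)).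
Qed.

Lemma good_Hind (g : {ffun box T -> F}) L : (lin_comp (perext g) <= L)%N ->
  forall ps, indep_mod (perext g) ps -> (size ps <= L)%N.
Proof.
move=> hL ps hps; apply: leq_trans hL.
by have [_ h] := lin_comp_spec (quot_dim_ex g); apply: h.
Qed.

Definition code_dflt L : code_t F n L :=
  ([ffun _ => [ffun _ => ord0]], [ffun _ => ord0], [ffun _ => [ffun _ => 0]], [ffun _ => 0]).

Lemma card_good L :
  (#|[set g : {ffun box T -> F} | (lin_comp (perext g) <= L)%N]| <= #|{: code_t F n L}|)%N.
Proof.
have ex : forall g : {ffun box T -> F}, exists c : code_t F n L,
    (lin_comp (perext g) <= L)%N -> Rep c (perext g).
  move=> g; case: (boolP (lin_comp (perext g) <= L)%N) => h.
    by exists (the_code (good_Hind h)) => _; exact: Rep_code.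
  by exists (code_dflt L).
pose f g := proj1_sig (constructive_indefinite_description _ (ex g)).
have hf : forall g, (lin_comp (perext g) <= L)%N -> Rep (f g) (perext g).
  by move=> g; exact: (proj2_sig (constructive_indefinite_description _ (ex g))).
apply: (@leq_card_in _ _ f) => g1 g2; rewrite !inE => h1 h2 e.
have R1 := hf _ h1; have R2 := hf _ h2; rewrite e in R1.
apply/ffunP => b; rewrite -!perext_pt.
exact: (Rep_uniq R1 R2).
Qed.

End Per.

Lemma card_bigcup_le (I T : finType) (P : pred I) (A : I -> {set T}) :
  (#|\bigcup_(i | P i) A i| <= \sum_(i | P i) #|A i|)%N.
Proof.
elim/big_rec2: _ => [|i U x _ IH]; first by rewrite cards0.
by apply: leq_trans (leq_card_setU _ _) _; rewrite leq_add2l.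
Qed.

Lemma card_sig_le (T1 T2 : finType) (A : {set T1}) (B : T1 -> {set T2}) m :
  (forall a, a \in A -> #|B a| <= m)%N ->
  (#|[set p : T1 * T2 | (p.1 \in A) && (p.2 \in B p.1)]| <= #|A| * m)%N.
Proof.
move=> hB.
have sub : [set p : T1 * T2 | (p.1 \in A) && (p.2 \in B p.1)]
    \subset \bigcup_(a in A) [set (a, b) | b in B a].
  apply/subsetP => [[a b]]; rewrite inE /= => /andP [ha hb].
  by apply/bigcupP; exists a => //; apply/imsetP; exists b.
apply: leq_trans (subset_leq_card sub) _.
apply: leq_trans (card_bigcup_le _ _) _.
rewrite -sum_nat_const; apply: leq_sum => a ha.
by apply: leq_trans (leq_imset_card _ _) _; apply: hB.
Qed.

Section Count.
Variables (F : finFieldType) (n : nat) (T : 'I_n -> nat).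
Hypothesis HT : forall i, (0 < T i)%N.

Lemma card_code L : #|{: code_t F n L}| =
  ((L.+1 ^ n) ^ L.+1 * (Kc n L) ^ (L.+1 * n) * (#|F| ^ L.+1) ^ (Kc n L) * #|F| ^ L.+1)%N.
Proof. by rewrite !card_prod !card_ffun !card_prod !card_ord. Qed.

Lemma kerr_attained k (f : {ffun box T -> F}) : exists g : {ffun box T -> F},
  (#|[set b | f b != g b]| <= k)%N /\ lin_comp (perext g) = kerr_lin_comp T k (perext f).
Proof.
pose Q v := exists g : {ffun box T -> F},
  (#|[set b | f b != g b]| <= k)%N /\ lin_comp (perext g) = v.
have : Q (kerr_lin_comp T k (perext f)).
  rewrite /kerr_lin_comp; apply: (big_ind Q).
  - exists f; split => //; apply: leq_trans (leq0n k) ; rewrite leqn0 cards_eq0.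
    by apply/eqP/setP => b; rewrite !inE eqxx.
  - move=> x y hx hy; rewrite /minn; by case: ifP.
  - move=> g hg; exists g; split => //.
    by move: hg; congr (_ <= _)%N; apply: eq_card => b; rewrite !inE perext_pt.
by [].
Qed.

Lemma card_ball k L :
  (#|[set f : {ffun box T -> F} | (kerr_lin_comp T k (perext f) <= L)%N]|
   <= #|{: code_t F n L}| * ((\sum_(j < k.+1) 'C(#|box T|, j)) * #|F| ^ k))%N.
Proof.
pose Good := [set g : {ffun box T -> F} | (lin_comp (perext g) <= L)%N].
pose SA := [set S : {set box T} | (#|S| <= k)%N].
pose BS := [set p : {set box T} * {ffun box T -> F} |
   (p.1 \in SA) && (p.2 \in [set v : {ffun box T -> F} | v \in pffun_on 0 p.1 predT])].
pose h (x : {ffun box T -> F} * ({set box T} * {ffun box T -> F})) : {ffun box T -> F} :=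
  [ffun b => if b \in x.2.1 then x.2.2 b else x.1 b].
have sub : [set f : {ffun box T -> F} | (kerr_lin_comp T k (perext f) <= L)%N]
    \subset [set h x | x in setX Good BS].
  apply/subsetP => f; rewrite inE => hf.
  have [g [hd hg]] := kerr_attained k f.
  apply/imsetP; exists (g, ([set b | f b != g b], [ffun b => if f b != g b then f b else 0])).
    rewrite !inE /= hg hf /=; apply/andP; split => //.
    apply/forallP => b; rewrite ffunE !inE; case: ifP => _; by rewrite ?inE.
  apply/ffunP => b; rewrite !ffunE !inE.
  by case: (eqVneq (f b) (g b)) => [->|].
apply: leq_trans (subset_leq_card sub) _.
apply: leq_trans (leq_imset_card _ _) _.
rewrite cardsX; apply: leq_mul; first exact: card_good.
have hsig := @card_sig_le _ _ SA (fun S => [set v : {ffun box T -> F} | v \in pffun_on 0 S predT]) (#|F| ^ k)%N.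
apply: leq_trans (hsig _) _.
  move=> S; rewrite inE => hS; rewrite cardsE card_pffun_on cardT -cardE.
  by apply: leq_pexp2l => //; rewrite cardE; case: (enum F) (mem_enum F 0) => //.
apply: leq_mul => //.
have -> : SA = \bigcup_(j < k.+1) [set S : {set box T} | #|S| == j].
  apply/setP => S; rewrite !inE; apply/idP/bigcupP.
    by move=> hS; exists (Ordinal (hS : (#|S| < k.+1)%N)); rewrite ?inE.
  by move=> [j _]; rewrite inE => /eqP ->; rewrite -ltnS.
apply: leq_trans (card_bigcup_le _ _) _.
by apply: leq_sum => j _; rewrite card_draws.
Qed.

End Count.

Section Numeric.
Local Open Scope nat_scope.

Lemma le_pow q x : 2 <= q -> x <= q ^ x.
Proof.
move=> hq; elim: x => // x IH; rewrite expnS.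
have h : 0 < q ^ x by rewrite expn_gt0 (leq_trans _ hq).
nia.
Qed.

Lemma exp_mono_base x y e : x <= y -> x ^ e <= y ^ e.
Proof. by move=> h; elim: e => // e IH; rewrite !expnS leq_mul. Qed.

Lemma lin_exp B x : 0 < B -> x <= B * 2 ^ (x %/ B).
Proof.
move=> hB; have h1 := ltn_pmod x hB; have h2 := divn_eq x B.
have h3 : x %/ B < 2 ^ (x %/ B) := ltn_expl _ (isT : 1 < 2).
nia.
Qed.

Lemma pow_ratio M j e : j + e = M -> (M + 1) ^ j * e <= M ^ j.+1.
Proof.
elim: j e => [|j IH] e hje; first by rewrite expn0 mul1n expn1 -hje.
have hje' : j + e.+1 = M by rewrite addnS -addSn.
have := IH e.+1 hje'.
set P := (M + 1) ^ j => h.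
rewrite expnS [(M + 1) * P]mulnC -mulnA (expnS M j.+1).
have h2 : (M + 1) * e <= e.+1 * M by nia.
apply: leq_trans (leq_mul (leqnn P) h2) _.
rewrite mulnA; rewrite [M * _]mulnC; exact: leq_mul.
Qed.

Lemma pow_two M j : 2 * j <= M -> (M + 1) ^ j <= 2 * M ^ j.
Proof.
move=> h.
have he : j + (M - j) = M by rewrite subnKC //; nia.
have := pow_ratio he; rewrite expnS => h1.
case: (posnP M) => hM.
  by move: h; rewrite hM leqn0 muln_eq0 /= => /eqP ->; rewrite !expn0.
have : (M + 1) ^ j * M <= 2 * M ^ j * M.
  apply: leq_trans (_ : (M + 1) ^ j * (2 * (M - j)) <= _).
    by apply: leq_mul => //; nia.
  nia.
by rewrite leq_pmul2r.
Qed.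

Lemma ball_bound q D k N : 2 <= q -> 0 < D -> k * (2 * D * q * D) < N ->
  (\sum_(j < k.+1) 'C(N, j)) * q ^ k <= 2 * q ^ (2 * (N %/ D)).
Proof.
move=> hq hD hk.
set M := 2 * D; set t := M * q; set a := N %/ D.
have hM : 0 < M by rewrite /M muln_gt0.
have hq0 : 0 < q by apply: leq_trans hq.
have hkN : k <= N.
  apply: ltnW; apply: leq_ltn_trans hk; rewrite -{1}[k]muln1 leq_mul2l.
  by rewrite !muln_gt0 hD hq0 orbT.
set S := \sum_(j < k.+1) 'C(N, j).
have ha : S * M ^ (N - k) <= (M + 1) ^ N.
  rewrite /S expnDn big_distrl /=.
  apply: leq_trans (_ : \sum_(j < k.+1) 'C(N, j) * (M ^ (N - j) * 1 ^ j) <= _).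
    apply: leq_sum => j _; rewrite exp1n muln1 leq_mul2l leq_pexp2l ?orbT //.
    by apply: leq_sub2l; rewrite -ltnS.
  rewrite (big_ord_widen N.+1 (fun j => 'C(N, j) * (M ^ (N - j) * 1 ^ j))) //.
  rewrite [X in X <= _]big_mkcond /=; apply: leq_sum => j _.
  by case: ifP.
have hb : (M + 1) ^ N <= 2 * q ^ a * M ^ N.
  have eN : N = a * D + N %% D by rewrite /a -divn_eq.
  have hr : N %% D < D by rewrite ltn_pmod.
  rewrite {1}eN expnD [a * D]mulnC expnM.
  have h1 : (M + 1) ^ D <= q * M ^ D.
    have h0 : (M + 1) ^ D <= 2 * M ^ D by apply: pow_two; rewrite /M.
    apply: leq_trans h0 _.
    by rewrite leq_mul2r hq orbT.
  have h2 : (M + 1) ^ (N %% D) <= 2 * M ^ (N %% D).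
    apply: pow_two; rewrite /M leq_mul2l /=; exact: ltnW.
  apply: leq_trans (leq_mul (exp_mono_base a h1) h2) _.
  have eMN : M ^ N = M ^ (D * a) * M ^ (N %% D) by rewrite -expnD {1}eN mulnC.
  rewrite expnMn -expnM eMN; nia.
have hc : (q * M) ^ k <= q ^ a.
  apply: leq_trans (_ : (q ^ t) ^ k <= _).
    apply: exp_mono_base; rewrite /t mulnC; exact: le_pow.
  rewrite -expnM leq_pexp2l // /a leq_divRL //.
  apply: ltnW; move: hk; rewrite /t /M; nia.
have eMN : M ^ N = M ^ (N - k) * M ^ k by rewrite -expnD subnK.
have hd : S * q ^ k * M ^ N <= 2 * q ^ (2 * a) * M ^ N.
  have E1 : S * q ^ k * M ^ N = (S * M ^ (N - k)) * (q * M) ^ k.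
    by rewrite eMN expnMn; nia.
  have E2 : q ^ (2 * a) = q ^ a * q ^ a by rewrite mul2n -addnn expnD.
  have h1 := leq_mul ha hc; have h2 := leq_mul hb (leqnn (q ^ a)).
  rewrite E1 E2; nia.
by move: hd; rewrite leq_pmul2r // expn_gt0 hM.
Qed.

End Numeric.

Section Numeric2.
Local Open Scope nat_scope.

Definition Cd q n L :=
  (L.+1 ^ n) ^ L.+1 * (Kc n L) ^ (L.+1 * n) * (q ^ L.+1) ^ (Kc n L) * q ^ L.+1.

Lemma arith_cb1 n L : let w := L.+1 in let K := (n.-1 * w + n.+1).+1 in 1 <= n ->
  w * K + w <= (n - 1) * L ^ 2 + (3 * n + 3) * w.
Proof. move=> w K hn; rewrite /K /w -subn1; nia. Qed.

Lemma arith_cb2 n L : let w := L.+1 in let K := (n.-1 * w + n.+1).+1 in 1 <= n ->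
  w * K <= (2 * n + 1) * w ^ 2.
Proof. move=> w K hn; rewrite /K /w -subn1; nia. Qed.

Lemma code_bound q n L : 0 < q -> 1 <= n ->
  Cd q n L <= q ^ ((n - 1) * L ^ 2 + (3 * n + 3) * L.+1) * ((2 * n + 1) * L.+1 ^ 2) ^ (n * L.+1).
Proof.
move=> hq hn; rewrite /Cd /Kc.
set w := L.+1; set K := (n.-1 * w + n.+1).+1.
have e1 : (q ^ w) ^ K * q ^ w = q ^ (w * K + w) by rewrite -expnM -expnD.
have e2 : (w ^ n) ^ w * K ^ (w * n) = (w * K) ^ (n * w).
  by rewrite -expnM [w * n]mulnC expnMn.
have h1 : w * K + w <= (n - 1) * L ^ 2 + (3 * n + 3) * w.
  exact: arith_cb1.
have h2 : w * K <= (2 * n + 1) * w ^ 2 by exact: arith_cb2.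
rewrite -mulnA e1 e2 mulnC; apply: leq_mul.
  by apply: leq_pexp2l.
exact: exp_mono_base.
Qed.

End Numeric2.

Section Numeric3.
Local Open Scope nat_scope.

Lemma amgm x y : 2 * x * y <= x ^ 2 + y ^ 2.
Proof. case: (leqP x y) => h; nia. Qed.

Lemma arith_L2 M1 n L N : 1 <= M1 -> 2 <= n ->
  M1 * ((n - 1) * L ^ 2) <= (M1 - 1) * N -> L ^ 2 <= N.
Proof.
move=> h1 h2 h3.
have h4 : M1 * ((n - 1) * L ^ 2) <= M1 * N.
  by apply: leq_trans h3 _; rewrite leq_mul2r leq_subr orbT.
rewrite leq_pmul2l // in h4; apply: leq_trans h4.
by apply: leq_pmull; rewrite subn_gt0.
Qed.

Lemma arith_w2 L N : L ^ 2 <= N -> 1 <= N -> L.+1 ^ 2 <= 4 * N.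
Proof. move=> h1 h2; nia. Qed.

Lemma arith_cond2 M1 X N a : 1 <= M1 -> M1 * X <= (M1 - 1) * N -> a * (4 * M1) <= N ->
  X + 4 * a <= N.
Proof. move=> h1 h2 h3; nia. Qed.

Lemma arith_X n D E2 G w u N a c1 G1 :
  0 < D -> G = c1 + G1 * n ->
  u * (32 * n * D) <= w -> w ^ 2 <= 4 * N -> N < a * D + D ->
  32 * D * E2 + 64 * D ^ 2 * G ^ 2 + 32 * D + 1 <= N ->
  2 * E2 + c1 * w + (G1 + 2 * u) * (n * w) < 2 * a.
Proof.
move=> hD eG h1 h2 h3 h4.
have h5 : 16 * D * (2 * u * n * w) <= 4 * N.
  apply: leq_trans h2; nia.
have h6 : 16 * D * (G * w) <= 64 * D ^ 2 * G ^ 2 + 4 * N.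
  have := amgm (8 * D * G) w; nia.
have e : 2 * E2 + c1 * w + (G1 + 2 * u) * (n * w) = 2 * E2 + G * w + 2 * u * n * w.
  by rewrite eG; nia.
rewrite e -(ltn_pmul2l (_ : 0 < 16 * D)) ?muln_gt0 //.
nia.
Qed.

Lemma posB n M1 : 2 <= n -> 1 <= M1 -> 0 < 32 * n * (4 * M1).
Proof. move=> h1 h2; nia. Qed.

Lemma rearr1 E2 A W Q C S : C <= A * W -> S <= 2 * Q ->
  E2 * (C * S) <= 2 * E2 * (A * W * Q).
Proof.
move=> h1 h2; have := leq_mul h1 h2; move=> h3.
apply: leq_trans (leq_mul (leqnn E2) h3) _; nia.
Qed.

Lemma final_nat q n M1 E2 N L k : 2 <= q -> 2 <= n -> 1 <= M1 -> 1 <= E2 ->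
  let D := 4 * M1 in
  let B := 32 * n * D in
  let G := (3 * n + 3) + (2 * n + 1) * B ^ 2 * n in
  32 * D * E2 + 64 * D ^ 2 * G ^ 2 + 32 * D + 1 <= N ->
  M1 * ((n - 1) * L ^ 2) <= (M1 - 1) * N ->
  k * (2 * D * q * D) < N ->
  E2 * (Cd q n L * ((\sum_(j < k.+1) 'C(N, j)) * q ^ k)) < q ^ N.
Proof.
move=> hq hn hM1 hE2 D B G hN hcond hk.
have hq0 : 0 < q by apply: leq_trans hq.
have hD : 0 < D by rewrite /D muln_gt0.
have hB : 0 < B := posB hn hM1.
set a := N %/ D; set w := L.+1; set u := w %/ B.
set G1 := (2 * n + 1) * B ^ 2.
set S := (\sum_(j < k.+1) 'C(N, j)) * q ^ k.
have hS : S <= 2 * q ^ (2 * a) by apply: ball_bound.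
have hC := code_bound L hq0 (ltnW hn).
have hL2 : L ^ 2 <= N by apply: (arith_L2 hM1 hn hcond).
have hN1 : 1 <= N by apply: leq_trans hN; rewrite leq_addl.
have hw2 : w ^ 2 <= 4 * N by apply: arith_w2.
have hcond2 : (n - 1) * L ^ 2 + 4 * a <= N.
  by apply: (arith_cond2 hM1 hcond); rewrite /a -/D leq_divM.
have hW : ((2 * n + 1) * w ^ 2) ^ (n * w) <= q ^ ((G1 + 2 * u) * (n * w)).
  rewrite [X in _ <= X]expnM; apply: exp_mono_base.
  have hw := lin_exp w hB.
  apply: leq_trans (_ : (2 * n + 1) * (B * 2 ^ u) ^ 2 <= _).
    by rewrite leq_mul2l leq_exp2r // hw orbT.
  rewrite expnMn mulnA -/G1 expnD; apply: leq_mul; first exact: le_pow.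
  by rewrite -expnM [u * 2]mulnC; apply: exp_mono_base.
have hE : 2 * E2 <= q ^ (2 * E2) by apply: le_pow.
have hX : 2 * E2 + (3 * n + 3) * w + (G1 + 2 * u) * (n * w) < 2 * a.
  apply: (@arith_X n D E2 G w u N a (3 * n + 3) G1) => //.
  - by rewrite /u -/B leq_divM.
  - rewrite /a {1}(divn_eq N D) ltn_add2l; exact: ltn_pmod.
set X := 2 * E2 + (3 * n + 3) * w + (G1 + 2 * u) * (n * w).
apply: leq_ltn_trans (rearr1 E2 hC hS) _.
apply: (@leq_ltn_trans (q ^ ((n - 1) * L ^ 2 + X + 2 * a))).
  apply: leq_trans (leq_mul hE (leq_mul (leq_mul (leqnn _) hW) (leqnn _))) _.
  rewrite -!expnD; apply: eq_leq; congr (q ^ _); rewrite /X.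
  by rewrite !addnA [2 * E2 + _]addnC !addnA.
apply: (@leq_trans (q ^ ((n - 1) * L ^ 2 + 4 * a))).
  by rewrite ltn_exp2l // -addnA ltn_add2l (_ : 4 = 2 + 2) // mulnDl ltn_add2r.
by rewrite leq_exp2l.
Qed.

End Numeric3.

Lemma real_cond (R : realType) (e1 : R) (M1 n N kk : nat) : (0 < M1)%N -> (2 <= n)%N ->
  M1%:R^-1 < e1 ->
  ~ (Num.sqrt ((1 - e1) * N%:R / (n - 1)%:R) < kk%:R :> R) ->
  (M1 * ((n - 1) * kk ^ 2) <= (M1 - 1) * N)%N.
Proof.
move=> hM hn he h.
set x := (1 - e1) * N%:R / (n - 1)%:R.
have hle : kk%:R <= Num.sqrt x by rewrite leNgt; apply/negP.
case: (leP x 0) => hx.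
  rewrite ler0_sqrtr // lern0 in hle.
  by rewrite (eqP hle) exp0n // !muln0.
have hk2 : kk%:R ^+ 2 <= x.
  by rewrite -(sqr_sqrtr (ltW hx)) ler_sqr ?nnegrE ?sqrtr_ge0 ?ler0n.
have hn1 : 0 < (n - 1)%:R :> R by rewrite ltr0n subn_gt0.
move: hk2; rewrite /x ler_pdivlMr // => hk2.
have hM' : 0 < M1%:R :> R by rewrite ltr0n.
have hN : 0 <= N%:R :> R by [].
have h3 : (1 - e1) * N%:R <= (1 - M1%:R^-1) * N%:R.
  by apply: ler_wpM2r => //; rewrite lerD2l lerN2 ltW.
have e : (M1%:R - 1) * N%:R = M1%:R * ((1 - M1%:R^-1) * N%:R) :> R.
  by rewrite mulrA mulrBr mulr1 mulfV ?gt_eqF.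
have fin : M1%:R * ((n - 1)%:R * (kk%:R * kk%:R)) <= (M1%:R - 1) * N%:R :> R.
  rewrite e; apply: ler_wpM2l; first exact: ltW.
  by rewrite -expr2 mulrC; apply: le_trans hk2 h3.
rewrite -(ler_nat R) !natrM [(M1 - 1)%:R]natrB //.
Qed.

Lemma prob_final (R : realType) (Q good bad E2 : nat) (e2 : R) :
  (good + bad = Q)%N -> (E2 * bad < Q)%N -> (0 < E2)%N -> E2%:R^-1 < e2 ->
  1 - e2 < good%:R / Q%:R.
Proof.
move=> hQ hb hE he.
have hQ0 : 0 < Q%:R :> R by rewrite ltr0n; apply: leq_ltn_trans hb.
have e : good%:R / Q%:R = 1 - bad%:R / Q%:R :> R.
  have eQ : Q%:R = good%:R + bad%:R :> R by rewrite -natrD hQ.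
  apply: (mulIf (lt0r_neq0 hQ0)); rewrite mulrBl mul1r !mulfVK ?(lt0r_neq0 hQ0) //.
  by rewrite eQ addrK.
rewrite e ltrD2l ltrN2 (lt_trans _ he) //.
rewrite ltr_pdivrMr // mulrC ltr_pdivlMr ?ltr0n // -natrM ltr_nat.
by rewrite mulnC.
Qed.

Lemma exists_inv_nat (R : realType) (e : R) : 0 < e ->
  exists M : nat, (0 < M)%N /\ M%:R^-1 < e.
Proof.
move=> he; exists (Num.Def.trunc e^-1).+1; split => //.
have h0 : 0 <= e^-1 by rewrite invr_ge0 ltW.
case/andP: (truncn_itv h0) => _ h.
by rewrite invf_plt ?posrE ?ltr0n.
Qed.

Lemma card_box n (T : 'I_n -> nat) : (forall i, 0 < T i)%N ->
  #|box T| = (\prod_(i < n) T i)%N.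
Proof.
move=> HT; rewrite card_dep_ffun foldrE big_image /=.
by apply: eq_bigr => i _; rewrite card_ord prednK.
Qed.

Lemma le_sq l : (l <= l ^ 2)%N.
Proof. by case: l => // l; rewrite expnS expn1 leq_pmulr. Qed.

Unset Implicit Arguments.
Set Strict Implicit.

Theorem mainTheorem5 (R : realType) (F : finFieldType) (e1 : R) :
  0 < e1 ->
  exists2 e3 : R, 0 < e3 &
  forall n : nat, (2 <= n)%N ->
  forall e2 : R, 0 < e2 ->
  exists C : R,
  forall T : 'I_n -> nat, (forall i, 0 < T i)%N ->
  C < (\prod_(i < n) T i)%:R ->
  forall k : nat, k%:R < e3 * (\prod_(i < n) T i)%:R ->
  1 - e2 < @per_prob F n T R
     (fun s => Num.sqrt ((1 - e1) * (\prod_(i < n) T i)%:R / (n - 1)%:R)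
               < (kerr_lin_comp T k s)%:R).
Proof.
move=> he1.
have [M1 [hM1 hM1e]] := exists_inv_nat he1.
have hq : (2 <= #|F|)%N := card_finNzRing_gt1 F.
pose D := (4 * M1)%N.
pose E3 := (2 * D * #|F| * D)%N.
have hE3 : (0 < E3)%N by rewrite /E3 /D !muln_gt0 hM1 (leq_trans _ hq).
exists (E3%:R^-1); first by rewrite invr_gt0 ltr0n.
move=> n hn e2 he2.
have [E2 [hE2 hE2e]] := exists_inv_nat he2.
pose B := (32 * n * D)%N.
pose G := (3 * n + 3 + (2 * n + 1) * B ^ 2 * n)%N.
pose C0 := (32 * D * E2 + 64 * D ^ 2 * G ^ 2 + 32 * D + 1)%N.
exists C0%:R => T HT hC k hk.
set N := (\prod_(i < n) T i)%N in hC hk *.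
have hN : (C0 <= N)%N by apply: ltnW; rewrite -(ltr_nat R).
have hkN : (k * E3 < N)%N.
  by rewrite -(ltr_nat R) natrM -ltr_pdivlMr ?ltr0n // mulrC.
pose P := fun l => (M1 * ((n - 1) * l ^ 2) <= (M1 - 1) * N)%N.
have P0 : exists l, P l by exists 0%N; rewrite /P exp0n // !muln0.
have Pb : forall l, P l -> (l <= N)%N.
  by move=> l hl; apply: leq_trans (le_sq l) (arith_L2 hM1 hn hl).
case: (ex_maxnP P0 Pb) => Ls hPL hmax.
rewrite /per_prob.
set Sg := [set f : {ffun box T -> F} | pbool _].
have hcard : (#|Sg| + #|~: Sg| = #|F| ^ N)%N.
  by rewrite cardsC card_ffun card_box.
have hsub : ~: Sg \subset [set f : {ffun box T -> F} | (kerr_lin_comp T k (perext f) <= Ls)%N].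
  apply/subsetP => f; rewrite !inE => hf; apply: hmax.
  apply: (real_cond (R := R) (e1 := e1)) => // hlt.
  by move/negP: hf; apply; apply/pboolP.
have hbad : (#|~: Sg| <= Cd #|F| n Ls * ((\sum_(j < k.+1) 'C(N, j)) * #|F| ^ k))%N.
  have hh := subset_leq_card hsub.
  refine (leq_trans hh _).
  apply: leq_trans (card_ball F HT k Ls) _.
  by rewrite card_code card_box.
have hfin := @final_nat #|F| n M1 E2 N Ls k hq hn hM1 hE2 hN hPL hkN.
apply: (prob_final (E2 := E2) hcard) => //.
apply: leq_ltn_trans _ hfin; by rewrite leq_mul2l hbad orbT.
Qed.
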